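(* Let $f_1,\dots,f_n\colon\mathbb{R}\to\mathbb{R}$ be differentiable and Lipschitz continuous, each having only finitely many zeros, with $f_i'(q)\neq 0$ at every zero $q$ of $f_i$. Let $\mathcal{Z}=\bigcap_{i\in[n]}\{z: f_i(z)<0\}$ and let $z^{\mathrm{obs}}\in\mathcal{Z}$. Fix $\varepsilon_{\max}>0$. For $\varepsilon_{\min}\in(0,\varepsilon_{\max}]$ and $S>0$, let $p_{\mathrm{grid}}=p_{\mathrm{grid}}(\varepsilon_{\min},S)$ be the output of the adaptive grid procedure described in the context, using the grid width $d(\cdot)$ defined there. Then there exist constants $C>0$, $\varepsilon_0>0$, $S_0>0$ (independent of $\varepsilon_{\min}$ and $S$) such that for all $\varepsilon_{\min}\in(0,\varepsilon_0)$ and all $S>S_0$, $$|p_{\mathrm{selective}}-p_{\mathrm{grid}}|\le C\bigl(\varepsilon_{\min}+\exp(-S^2/2)\bigr),$$ i.e. $|p_{\mathrm{selective}}-p_{\mathrm{grid}}|=O(\varepsilon_{\min}+\exp(-S^2/2))$ as $\varepsilon_{\min}\to0$, $S\to\infty$.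
   Context: Let $W\sim\mathcal{N}(0,1)$. The selective $p$-value is $p_{\mathrm{selective}}=\mathbb{P}(|W|>|z^{\mathrm{obs}}|\mid W\in\mathcal{Z})$. For each $z\in\mathbb{R}$ and $i\in[n]$, let $L_i(z)>0$ denote a Lipschitz constant of $f_i$ on $[z-\varepsilon_{\max},z+\varepsilon_{\max}]$, and define the grid width $d(z)=\min_{i:\,f_i(z)<0}|f_i(z)|/L_i(z)$ if $z\in\mathcal{Z}$, and $d(z)=\max_{i:\,f_i(z)\ge0}|f_i(z)|/L_i(z)$ if $z\notin\mathcal{Z}$. Adaptive grid procedure: set $z_0=-S$ and, while $z_j<S$, set $z_{j+1}=z_j+\min(\varepsilon_{\max},\max(d(z_j),\varepsilon_{\min}))$. Let $d^{\mathrm{obs}}=\min(\varepsilon_{\max},d(z^{\mathrm{obs}}))$, $J(z^{\mathrm{obs}})=[z^{\mathrm{obs}}-d^{\mathrm{obs}},z^{\mathrm{obs}}+d^{\mathrm{obs}}]$, $\mathcal{Z}^{\mathrm{grid}}=\bigcup_{j:\,z_j\in\mathcal{Z}}[z_j,z_{j+1}]\cup J(z^{\mathrm{obs}})$ (union over the generated grid points), and output $p_{\mathrm{grid}}=\mathbb{P}(|W|>|z^{\mathrm{obs}}|\mid W\in\mathcal{Z}^{\mathrm{grid}})$. *)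

(* Defs.v *)
From HB Require Import structures.
From mathcomp Require Import all_boot all_order all_algebra.
From mathcomp Require Import all_classical all_reals all_analysis.
Set Implicit Arguments. Unset Strict Implicit. Unset Printing Implicit Defensive.
Import Order.TTheory GRing.Theory Num.Def Num.Theory.
Local Open Scope classical_set_scope.
Local Open Scope ring_scope.

Section grid.
Variables (R : realType) (n : nat) (f L : 'I_n -> R -> R).

Definition Zset : set R := [set z | forall i : 'I_n, f i z < 0].

Definition ratio (i : 'I_n) (z : R) : R := `|f i z| / L i z.

(* For z in Z every index satisfies f_i z < 0, and the
   minimum over the (nonempty when n > 0) index set is taken with neutral
   element the maximum of all the (nonnegative) ratios, which is >= every
   term, so it does not affect the minimum.  For z not in Z the maximum over
   the (nonempty) set {i | f_i z >= 0} of nonnegative ratios uses neutral 0. *)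
Definition dwidth (z : R) : R :=
  if `[< Zset z >] then
    \big[Num.min/ \big[Num.max/0]_(i < n) ratio i z]_(i < n | f i z < 0) ratio i z
  else \big[Num.max/0]_(i < n | 0 <= f i z) ratio i z.

Variables (eps_max eps_min S zobs : R).

Definition gstep (z : R) : R := Num.min eps_max (Num.max (dwidth z) eps_min).

(* z_0 = -S, z_{j+1} = z_j + step(z_j); the procedure generates these points
   while z_j < S. *)
Fixpoint zgrid (j : nat) : R :=
  match j with
  | 0 => - S
  | j.+1 => zgrid j + gstep (zgrid j)
  end.

Definition dobs : R := Num.min eps_max (dwidth zobs).

Definition Zgrid : set R :=
  (\bigcup_(j in [set: nat])
     [set x | zgrid j < S /\ Zset (zgrid j) /\ zgrid j <= x <= zgrid j.+1])
  `|` [set x | zobs - dobs <= x <= zobs + dobs].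

End grid.

Definition cond_prob_std_normal {R : realType} (A B : set R) : R :=
  fine (normal_prob 0 1 (A `&` B)) / fine (normal_prob 0 1 B).

Definition p_selective {R : realType} n (f : 'I_n -> R -> R) (zobs : R) : R :=
  cond_prob_std_normal [set w | `|zobs| < `|w|] (Zset f).

Definition p_grid {R : realType} n (f L : 'I_n -> R -> R)
  (eps_max eps_min S zobs : R) : R :=
  cond_prob_std_normal [set w | `|zobs| < `|w|] (Zgrid f L eps_max eps_min S zobs).

(* Main.v *)
Require Import Defs.
From HB Require Import structures.
From mathcomp Require Import all_boot all_order all_algebra.
From mathcomp Require Import all_classical all_reals all_analysis.
From mathcomp Require Import ring lra measurable_realfun.
Import Order.TTheory GRing.Theory Num.Def Num.Theory.
Import numFieldTopology.Exports numFieldNormedType.Exports.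
Local Open Scope classical_set_scope.
Local Open Scope ring_scope.


Section tail.
Variable R : realType.

Definition gF (x : R) : R := - expR (- x ^+ 2 / 2).
Definition gf (x : R) : R := x * expR (- x ^+ 2 / 2).

Lemma is_derive_gF (x : R) : is_derive x (1:R) gF (gf x).
Proof.
rewrite /gF /gf.
apply: is_derive_eq.
rewrite !scaler0 add0r.
change (2^-1 *: - (x%:A + x%:A)) with (2^-1 * - (x * 1 + x * 1) : R).
by field.
Qed.

Lemma derivable_gF (x : R) : derivable gF x 1.
Proof. by case: (is_derive_gF x). Qed.

Lemma continuous_gF : continuous gF.
Proof.
move=> x; apply: differentiable_continuous; apply/derivable1_diffP.
exact: derivable_gF.
Qed.

Lemma continuous_gf : continuous gf.
Proof.
move=> x; apply: differentiable_continuous; apply/derivable1_diffP.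
rewrite /gf; exact: (@ex_derive _ _ _ _ _ _ _ _).
Qed.

Lemma gF_cvg : gF x @[x --> +oo] --> (0:R).
Proof.
rewrite /gF -oppr0; apply: cvgN.
rewrite (_ : (fun x => expR (- x ^+ 2 / 2)) =
  (fun z => expR (- z)) \o (fun x : R => x ^+ 2 / 2)); last first.
  by apply: funext => x /=; rewrite mulNr.
apply: (@cvg_comp _ _ _ _ _ _ (pinfty_nbhs R)); last exact: cvgr_expR.
apply/cvgryPge => A.
near=> x.
have hx : Num.max 1 (2 * A) <= x by near: x; apply: nbhs_pinfty_ge; rewrite num_real.
move: hx; rewrite ge_max => /andP[h1 h2].
nra.
Unshelve. all: by end_near.
Qed.

Lemma int_gf (S : R) : 0 <= S ->
  (\int[lebesgue_measure]_(x in `[S, +oo[) (gf x)%:E = (expR (- S ^+ 2 / 2))%:E)%E.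
Proof.
move=> hS; rewrite (@ge0_continuous_FTC2y _ gf gF S 0).
- by rewrite /gF sub0e EFinN oppeK.
- by move=> x hx; rewrite /gf mulr_ge0 ?expR_ge0 //; exact: le_trans hx.
- apply: continuous_subspaceT; exact: continuous_gf.
- exact: gF_cvg.
- move=> x _; exact: derivable_gF.
- exact/cvg_at_right_filter/continuous_gF.
- by move=> x _; rewrite derive1E; have [_ ->] := is_derive_gF x.
Qed.

Local Notation P := (@normal_prob R 0 1).

Lemma pdfE x : normal_pdf (0:R) 1 x = normal_peak (1:R) * expR (- x ^+ 2 / 2).
Proof. rewrite normal_pdfE ?oner_neq0 // /normal_fun subr0 expr1n.
by []. Qed.

Lemma peak_le1 : normal_peak (1:R) <= 1.
Proof.
have hp : (2:R) <= pi := pi_ge2 R.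
have h1 : 1 <= 1 ^+ 2 * pi *+ 2 :> R by rewrite expr1n mul1r mulr2n; lra.
rewrite /normal_peak.
set t := 1 ^+ 2 * pi *+ 2 in h1 *.
have ht : 0 < t by lra.
rewrite invf_le1; last by rewrite sqrtr_gt0.
by rewrite -[X in X <= _]sqrtr1 ler_sqrt //; lra.
Qed.

Lemma pdf_le_exp x : normal_pdf (0:R) 1 x <= expR (- x ^+ 2 / 2).
Proof.
rewrite pdfE ler_piMl ?expR_ge0 //; exact: peak_le1.
Qed.

Lemma pdf_le1 x : normal_pdf (0:R) 1 x <= 1.
Proof.
apply: le_trans (pdf_le_exp x) _; rewrite expR_le1.
rewrite mulNr oppr_le0 divr_ge0 //; exact: sqr_ge0.
Qed.


Lemma int_pdf_tail (S : R) : 1 <= S ->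
  (\int[lebesgue_measure]_(x in `[S, +oo[) (normal_pdf (0:R) 1 x)%:E
     <= (expR (- S ^+ 2 / 2))%:E)%E.
Proof.
move=> hS; rewrite -int_gf; last lra.
apply: ge0_le_integral => //.
- by move=> x _; rewrite lee_fin normal_pdf_ge0.
- apply/measurable_EFinP; apply: measurable_funTS; exact: measurable_normal_pdf.
- apply/measurable_EFinP; apply: measurable_funTS.
  exact: continuous_measurable_fun continuous_gf.
- move=> x; rewrite /= in_itv /= andbT => hx.
  rewrite lee_fin; apply: le_trans (pdf_le_exp x) _.
  rewrite /gf ler_peMl ?expR_ge0 //; lra.
Qed.

Lemma tail_right (S : R) : 1 <= S -> (P `[S, +oo[%classic <= (expR (- S ^+ 2 / 2))%:E)%E.
Proof. exact: int_pdf_tail. Qed.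

Lemma tail_left (S : R) : 1 <= S -> (P `]-oo, (- S)%R]%classic <= (expR (- S ^+ 2 / 2))%:E)%E.
Proof.
move=> hS; rewrite /normal_prob ge0_integration_by_substitutionNy.
- under eq_integral => x _ do rewrite /= pdfE sqrrN -pdfE.
  exact: int_pdf_tail.
- apply: continuous_subspaceT; exact: continuous_normal_pdf (oner_neq0 R).
- by move=> x _; exact: normal_pdf_ge0.
Qed.

Lemma P_itv_le (a b : R) : a <= b -> (P `[a, b]%classic <= (b - a)%:E)%E.
Proof.
move=> ab; rewrite /normal_prob.
apply: (@le_trans _ _ (\int[lebesgue_measure]_(x in `[a, b]) (cst 1%E) x))%E.
  apply: ge0_le_integral => //.
  - by move=> x _; rewrite lee_fin normal_pdf_ge0.
  - apply/measurable_EFinP; apply: measurable_funTS; exact: measurable_normal_pdf.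
  - by move=> x _; rewrite lee_fin pdf_le1.
rewrite integral_cst // mul1e.
have := @lebesgue_measure_itv R `[a, b]; rewrite /= => ->.
rewrite lte_fin; case: ifP => _; first by rewrite -EFinD.
by rewrite lee_fin subr_ge0.
Qed.

Lemma P_itv_gt0 (c r : R) : 0 < r -> (0 < P `](c - r)%R, (c + r)%R[%classic)%E.
Proof.
move=> r0; rewrite /normal_prob.
set m := normal_peak (1:R) * expR (- (`|c| + r) ^+ 2 / 2).
have m0 : 0 < m by rewrite mulr_gt0 ?expR_gt0 // normal_peak_gt0 // oner_neq0.
apply: (@lt_le_trans _ _ (\int[lebesgue_measure]_(x in `](c - r)%R, (c + r)%R[) (cst m%:E) x))%E.
  rewrite integral_cst //.
  have := @lebesgue_measure_itv R `](c - r)%R, (c + r)%R[; rewrite /= => ->.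
  rewrite lte_fin ifT; last lra.
  by rewrite -EFinD -EFinM lte_fin mulr_gt0 //; lra.
apply: ge0_le_integral => //.
- by move=> x _; rewrite lee_fin ltW.
- apply/measurable_EFinP; apply: measurable_funTS; exact: measurable_normal_pdf.
- move=> x; rewrite /= in_itv /= => /andP[x1 x2].
  rewrite lee_fin pdfE /m ler_wpM2l ?normal_peak_ge0 // ler_expR.
  have /andP[c1 c2] : - `|c| <= c <= `|c| by rewrite -ler_norml.
  rewrite !mulNr lerN2 ler_pM2r ?invr_gt0 //.
  nra.
Qed.

End tail.


Section meas.
Variable R : realType.
Local Notation P := (@normal_prob R 0 1).

Lemma P_fin (X : set R) : measurable X -> P X \is a fin_num.
Proof. move=> mX; exact: fin_num_measure. Qed.

Lemma P_ge0 (X : set R) : 0 <= fine (P X).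
Proof. by rewrite fine_ge0 // measure_ge0. Qed.

Lemma P_le1 (X : set R) : measurable X -> fine (P X) <= 1.
Proof.
move=> mX; rewrite -lee_fin fineK ?P_fin //; exact: probability_le1.
Qed.

Lemma P_mono (X Y : set R) : measurable X -> measurable Y -> X `<=` Y ->
  fine (P X) <= fine (P Y).
Proof.
move=> mX mY XY; apply: fine_le; rewrite ?P_fin //; apply: le_measure; rewrite ?inE //.
Qed.

Lemma P_sub_le (X Y E : set R) : measurable X -> measurable Y -> measurable E ->
  X `<=` Y `|` E -> fine (P X) <= fine (P Y) + fine (P E).
Proof.
move=> mX mY mE XYE.
have fX := @P_fin X mX; have fY := @P_fin Y mY; have fE := @P_fin E mE.
rewrite -(fineD fY fE); apply: fine_le => //; first by rewrite fin_numD fY fE.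
apply: (le_trans _ (measureU2 P mY mE)).
apply: le_measure; rewrite ?inE //; exact: measurableU.
Qed.

Lemma ratio_bound (a b a' b' m : R) : 0 <= a -> a <= b -> 0 <= a' -> a' <= b' ->
  0 < b -> a <= a' + m -> a' <= a + m -> b <= b' + m -> b' <= b + m ->
  `|a / b - a' / b'| <= 2 * m / b.
Proof.
move=> a0 ab a'0 a'b' b0 h1 h2 h3 h4.
have [b'0|b'0] := leP b' 0.
  have eb' : b' = 0 by apply/eqP; rewrite eq_le b'0 /=; lra.
  have ea' : a' = 0 by apply/eqP; rewrite eq_le; apply/andP; split; lra.
  rewrite ea' eb' invr0 mulr0 subr0 ger0_norm; last by rewrite divr_ge0 // ltW.
  rewrite ler_pM2r ?invr_gt0 //; lra.
have -> : a / b - a' / b' = (a * b' - a' * b) / (b * b').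
  by field; apply/andP; split; rewrite gt_eqF.
rewrite normrM (@ger0_norm _ (_^-1)); last by rewrite invr_ge0 mulr_ge0 // ltW.
rewrite ler_pdivrMr ?mulr_gt0 //.
have -> : 2 * m / b * (b * b') = 2 * m * b' by field; rewrite gt_eqF.
rewrite ler_norml; apply/andP; split; nra.
Qed.

Lemma cond_diff (A B B' E : set R) : measurable A -> measurable B ->
  measurable B' -> measurable E -> (forall x, ~ E x -> (B x <-> B' x)) ->
  0 < fine (P B) ->
  `|cond_prob_std_normal A B - cond_prob_std_normal A B'|
     <= 2 * fine (P E) / fine (P B).
Proof.
move=> mA mB mB' mE hBB' b0.
rewrite /cond_prob_std_normal.
have sub1 : forall X Y, (forall x, ~ E x -> X x -> Y x) -> X `<=` Y `|` E.
  move=> X Y hXY x hx; have [hE|hE] := pselect (E x); first by right.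
  by left; exact: hXY.
apply: ratio_bound.
- exact: P_ge0.
- by apply: P_mono => //; try (exact: measurableI); move=> x [].
- exact: P_ge0.
- by apply: P_mono => //; try (exact: measurableI); move=> x [].
- exact: b0.
- apply: P_sub_le; [exact: measurableI|exact: measurableI|exact: mE|].
  by apply: sub1 => x hx [ha hb]; split => //; exact: (hBB' x hx).1.
- apply: P_sub_le; [exact: measurableI|exact: measurableI|exact: mE|].
  by apply: sub1 => x hx [ha hb]; split => //; exact: (hBB' x hx).2.
- by apply: P_sub_le => //; apply: sub1 => x hx; exact: (hBB' x hx).1.
- by apply: P_sub_le => //; apply: sub1 => x hx; exact: (hBB' x hx).2.
Qed.

Definition NN (s : seq R) (e : R) : set R :=
  \big[setU/set0]_(q <- s) `[(q - e)%R, (q + e)%R]%classic.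

Lemma NN_mem s e x : NN s e x <-> exists2 q, q \in s & `|x - q| <= e.
Proof.
rewrite /NN; elim: s => [|q s IH].
  by rewrite big_nil; split => // -[].
rewrite big_cons; split.
- case.
    rewrite /= in_itv /= => /andP[h1 h2]; exists q; first by rewrite mem_head.
    by rewrite ler_norml; apply/andP; split; lra.
  by move/IH => [q' q's hq']; exists q' => //; rewrite in_cons q's orbT.
- case=> q'; rewrite in_cons => /orP[/eqP -> | q's] hq'.
    left; rewrite /= in_itv /=; move: hq'; rewrite ler_norml => /andP[h1 h2].
    apply/andP; split; lra.
  by right; apply/IH; exists q'.
Qed.

Lemma NN_meas s e : measurable (NN s e).
Proof.
rewrite /NN; elim: s => [|q s IH]; first by rewrite big_nil.
rewrite big_cons; exact: measurableU.
Qed.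

Lemma NN_P s e : 0 <= e -> fine (P (NN s e)) <= (size s)%:R * (2 * e).
Proof.
move=> e0; elim: s => [|q s IH].
  by rewrite /NN big_nil measure0 /= mul0r.
have -> : NN (q :: s) e = `[(q - e)%R, (q + e)%R]%classic `|` NN s e
  by rewrite /NN big_cons.
set I := `[(q - e)%R, (q + e)%R]%classic.
have mI : measurable I by exact: measurable_itv.
apply: le_trans (@P_sub_le (I `|` NN s e) I (NN s e) _ mI (NN_meas s e) _) _.
- exact: measurableU (NN_meas s e).
- by [].
have h1 : fine (P I) <= 2 * e.
  rewrite -lee_fin fineK ?P_fin //.
  have h2 := @P_itv_le R (q - e) (q + e).
  have -> : 2 * e = (q + e) - (q - e) by ring.
  apply: h2; lra.
rewrite /= -natr1 mulrDl mul1r; lra.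
Qed.


End meas.


Section grid_logic.
Variables (R : realType) (n : nat) (f L : 'I_n -> R -> R)
  (eps_max eps_min S zobs : R).
Hypothesis emin0 : 0 < eps_min.
Hypothesis eminmax : eps_min <= eps_max.
Hypothesis L0 : forall i z, 0 < L i z.
Hypothesis hL : forall i z x y, z - eps_max <= x <= z + eps_max ->
     z - eps_max <= y <= z + eps_max ->
     `|f i x - f i y| <= L i z * `|x - y|.
Hypothesis fc : forall i, continuous (f i).
Hypothesis Zobs : Zset f zobs.

Definition Nb x := exists i q, f i q = 0 /\ `|x - q| <= eps_min.

Let emax0 : 0 < eps_max. Proof. exact: lt_le_trans emin0 eminmax. Qed.

Lemma ivt_zero i a b : a <= b -> (f i a < 0) != (f i b < 0) ->
  exists2 c, a <= c <= b & f i c = 0.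
Proof.
move=> ab hne.
have := @IVT R (f i) a b 0 ab (continuous_subspaceT (fc i)).
case.
- rewrite ge_min le_max; move: hne.
  have [ha|ha] := ltP (f i a) 0; have [hb|hb] := ltP (f i b) 0 => //= _.
  + by rewrite ?(ltW ha) ?(ltW hb) ?ha ?hb ?orbT.
  + by rewrite ?(ltW ha) ?(ltW hb) ?ha ?hb ?orbT.
- by move=> c; rewrite in_itv /= => hc fc0; exists c.
Qed.

Lemma sign_const i x z : ~ Nb x -> `|x - z| <= eps_min ->
  (f i x < 0) = (f i z < 0).
Proof.
move=> hN; rewrite ler_norml => /andP[h1 h2].
apply/eqP; rewrite -[_ == _]negbK; apply/negP => hne; apply: hN.
have [xz|zx] := leP x z.
- have [c /andP[c1 c2] fc0] := @ivt_zero i x z xz hne.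
  exists i, c; split => //; rewrite ler_norml; apply/andP; split; lra.
- rewrite eq_sym in hne.
  have [c /andP[c1 c2] fc0] := @ivt_zero i z x (ltW zx) hne.
  exists i, c; split => //; rewrite ler_norml; apply/andP; split; lra.
Qed.

Local Notation d := (dwidth f L).
Local Notation st := (gstep f L eps_max eps_min).
Local Notation zg := (zgrid f L eps_max eps_min S).

Lemma gstep_ge z : eps_min <= st z.
Proof. by rewrite /gstep le_min eminmax le_max lexx orbT. Qed.

Lemma gstep_le z : st z <= eps_max.
Proof. by rewrite /gstep ge_min lexx. Qed.

Lemma gstep_big z : eps_min < st z -> st z <= d z.
Proof.
rewrite /gstep lt_min => /andP[_]; rewrite lt_max ltxx orbF => hd.
by rewrite ge_min ge_max lexx (ltW hd) orbT.
Qed.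

Lemma zgS j : zg j.+1 = zg j + st (zg j).
Proof. by []. Qed.

Lemma zg_lb j : - S + j%:R * eps_min <= zg j.
Proof.
elim: j => [|j IH]; first by rewrite /= mul0r addr0.
rewrite zgS -natr1 mulrDl mul1r addrA lerD //; exact: gstep_ge.
Qed.

Lemma ratio_mul i z : L i z * Defs.ratio f L i z = `|f i z|.
Proof. by rewrite /ratio mulrC divfK // gt_eqF. Qed.

Lemma inZ_lip z x i : Zset f z -> `|x - z| <= eps_max -> `|x - z| <= d z ->
  f i x <= 0.
Proof.
move=> hz h1 h2.
have hd : d z <= Defs.ratio f L i z.
  rewrite /dwidth asboolT //; apply: bigmin_le_cond; exact: hz.
have : `|f i x - f i z| <= L i z * `|x - z|.
  move: h1; rewrite ler_norml => /andP[a1 a2].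
  by apply: hL; apply/andP; split; lra.
have hfz := hz i.
have : L i z * `|x - z| <= `|f i z|.
  rewrite -ratio_mul ler_wpM2l ?(ltW (L0 _ _)) //; exact: le_trans h2 hd.
rewrite (ltr0_norm hfz) => h3 h4.
have := le_trans h4 h3; rewrite ler_norml => /andP[_]; lra.
Qed.

Lemma notZ_lip z x : ~ Zset f z -> eps_min < d z -> 0 <= x - z ->
  x - z <= eps_max -> x - z <= d z -> ~ Zset f x.
Proof.
move=> hz hdz h0 h1 h2.
have [i [hi hr]] : exists i, 0 <= f i z /\ d z <= Defs.ratio f L i z.
  apply: contrapT => H.
  have H' : forall i, 0 <= f i z -> Defs.ratio f L i z < d z.
    move=> i hi; rewrite ltNge; apply/negP => hle; apply: H; by exists i.
  have : d z < d z.
    rewrite {1}/dwidth asboolF //.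
    apply: (big_ind (fun v => v < d z)) => //.
    - exact: lt_trans emin0 hdz.
    - by move=> a b ha hb; rewrite gt_max ha hb.
  by rewrite ltxx.
move=> hx; have hfx := hx i.
have : `|f i x - f i z| <= L i z * `|x - z|.
  by apply: hL; apply/andP; split; lra.
have : L i z * `|x - z| <= `|f i z|.
  rewrite -ratio_mul ler_wpM2l ?(ltW (L0 _ _)) //.
  rewrite ger0_norm //; exact: le_trans h2 hr.
rewrite (ger0_norm hi) => h3 h4.
have := le_trans h4 h3; rewrite ler_norml => /andP[h5 _]; lra.
Qed.

Lemma bracket x : - S <= x -> exists j, zg j <= x < zg j.+1.
Proof.
move=> hx.
suff : exists m, x < zg m.
  case=> m; elim: m => [|m IH] /=.
    by rewrite ltNge hx.
  move=> hm; have [hle|hlt] := leP (zg m) x.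
    by exists m; rewrite hle hm.
  exact: IH.
have h0 : 0 <= (x + S) / eps_min by rewrite divr_ge0 ?(ltW emin0) //; lra.
exists (Num.trunc ((x + S) / eps_min)).+1.
have := zg_lb (Num.trunc ((x + S) / eps_min)).+1.
have : (x + S) / eps_min < (Num.trunc ((x + S) / eps_min)).+1%:R.
  by rewrite -truncn_lt_nat.
rewrite ltr_pdivrMr // => h1 h2.
lra.
Qed.

Lemma notN_neq0 x i : ~ Nb x -> f i x != 0.
Proof.
move=> hN; apply/eqP => h; apply: hN; exists i, x; split => //.
by rewrite subrr normr0 ltW.
Qed.

Lemma le0_Z x : ~ Nb x -> (forall i, f i x <= 0) -> Zset f x.
Proof. by move=> hN h i; rewrite lt_neqAle h notN_neq0. Qed.

Lemma grid_equiv x : ~ Nb x -> - S < x < S ->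
  (Zset f x <-> Zgrid f L eps_max eps_min S zobs x).
Proof.
move=> hN /andP[hx1 hx2]; split.
- move=> hZ; have [j /andP[j1 j2]] := bracket x (ltW hx1).
  left; exists j => //; split; first exact: le_lt_trans j1 hx2.
  split; last by rewrite j1 ltW.
  have [hs|hs] := leP (x - zg j) eps_min.
    move=> i; rewrite -(@sign_const i x (zg j) hN); first exact: hZ.
    by rewrite ger0_norm //; lra.
  move: j2; rewrite zgS => j2.
  have hst : eps_min < st (zg j) by lra.
  have hd := gstep_big (zg j) hst; have hm := gstep_le (zg j).
  apply: contrapT => hz.
  apply: (@notZ_lip (zg j) x hz _ _ _ _ hZ); lra.
- case.
  + case=> j _ [hj [hz /andP[j1 j2]]].
    have [hs|hs] := leP (x - zg j) eps_min.
      move=> i; rewrite (@sign_const i x (zg j) hN); first exact: hz.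
      by rewrite ger0_norm //; lra.
    move: j2; rewrite zgS => j2.
    have hst : eps_min < st (zg j) by lra.
    have hd := gstep_big (zg j) hst; have hm := gstep_le (zg j).
    apply: le0_Z => // i; apply: (@inZ_lip (zg j)) => //;
      rewrite ger0_norm; lra.
  + move=> /andP[j1 j2].
    have hd : dobs f L eps_max zobs <= eps_max by rewrite /dobs ge_min lexx.
    have hd' : dobs f L eps_max zobs <= d zobs
      by rewrite /dobs ge_min lexx orbT.
    have hb : `|x - zobs| <= dobs f L eps_max zobs
      by rewrite ler_norml; apply/andP; split; lra.
    apply: le0_Z => // i; apply: (@inZ_lip zobs) => //.
    + exact: le_trans hb hd.
    + exact: le_trans hb hd'.
Qed.

Lemma inZ_strict z x i : Zset f z -> `|x - z| <= eps_max -> `|x - z| < d z ->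
  f i x < 0.
Proof.
move=> hz h1 h2.
have hd : d z <= Defs.ratio f L i z.
  rewrite /dwidth asboolT //; apply: bigmin_le_cond; exact: hz.
have : `|f i x - f i z| <= L i z * `|x - z|.
  move: h1; rewrite ler_norml => /andP[a1 a2].
  by apply: hL; apply/andP; split; lra.
have hfz := hz i.
have : L i z * `|x - z| < `|f i z|.
  rewrite -ratio_mul ltr_pM2l ?L0 //; exact: lt_le_trans h2 hd.
rewrite (ltr0_norm hfz) => h3 h4.
have := le_lt_trans h4 h3; rewrite ltr_norml => /andP[_]; lra.
Qed.

Lemma dwidth_pos z : (0 < n)%N -> Zset f z -> 0 < d z.
Proof.
move=> hn hz; rewrite /dwidth asboolT //.
have rp : forall i, 0 < Defs.ratio f L i z.
  move=> i; rewrite /Defs.ratio divr_gt0 ?L0 // normr_gt0; exact: ltr0_neq0 (hz i).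
apply: (big_ind (fun v => 0 < v)) => //.
- apply: lt_le_trans (rp (Ordinal hn)) _.
  exact: le_bigmax.
- by move=> a b ha hb; rewrite lt_min ha hb.
Qed.

Lemma Zset_ball : (0 < n)%N -> exists2 r, 0 < r &
  forall x, `|x - zobs| < r -> Zset f x.
Proof.
move=> hn; exists (Num.min eps_max (d zobs)).
  by rewrite lt_min emax0 dwidth_pos.
move=> x; rewrite lt_min => /andP[h1 h2] i.
exact: (@inZ_strict zobs x i Zobs (ltW h1) h2).
Qed.

End grid_logic.


Theorem theorem2 (R : realType) (n : nat) (f L : 'I_n -> R -> R)
    (zobs eps_max : R) :
  (0 < n)%N ->
  (forall i x, derivable (f i) x 1) ->
  (forall i, exists k : R, forall x y, `|f i x - f i y| <= k * `|x - y|) ->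
  (forall i, finite_set [set q | f i q = 0]) ->
  (forall i q, f i q = 0 -> derive1 (f i) q != 0) ->
  Zset f zobs ->
  0 < eps_max ->
  (forall i z, 0 < L i z) ->
  (forall i z x y, z - eps_max <= x <= z + eps_max ->
     z - eps_max <= y <= z + eps_max ->
     `|f i x - f i y| <= L i z * `|x - y|) ->
  exists C eps0 S0 : R, [/\ 0 < C, 0 < eps0, 0 < S0 &
    forall eps_min S : R, 0 < eps_min -> eps_min <= eps_max ->
      eps_min < eps0 -> S0 < S ->
      `|p_selective f zobs - p_grid f L eps_max eps_min S zobs|
        <= C * (eps_min + expR (- S ^+ 2 / 2))].
Proof.
move=> hn hder _ hfin _ Zobs emax0 L0 hL.
have fc : forall i, continuous (f i).
  move=> i x; apply: differentiable_continuous; apply/derivable1_diffP.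
  exact: hder.
have [s hs] : exists s : seq R, [set q | exists i, f i q = 0] = [set` s].
  apply/finite_seqP.
  have -> : [set q | exists i, f i q = 0] =
      \bigcup_(i in [set: 'I_n]) [set q | f i q = 0].
    by apply/seteqP; split => x /= [i]; [exists i | move=> _ h; exists i].
  apply: bigcup_finite => //; exact: finite_finset.
pose P := @normal_prob R 0 1.
set B := Zset f.
have mB : measurable B.
  have -> : B = \bigcap_(i in [set: 'I_n]) (f i @^-1` `]-oo, 0[).
    apply/seteqP; split => x /=.
      by move=> h i _; rewrite /= in_itv /= h.
    by move=> h i; have := h i I; rewrite /= in_itv.
  apply: fin_bigcap_measurable; first exact: finite_finset.
  move=> i _; rewrite -[X in measurable X]setTI.
  exact: (continuous_measurable_fun (fc i)) measurableT _ (measurable_itv _).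
have b0 : 0 < fine (P B).
  have [r r0 hr] := @Zset_ball R n f L eps_max eps_max zobs emax0 (lexx _) L0 hL Zobs hn.
  have hI := @P_itv_gt0 R zobs r r0.
  have mI : measurable `](zobs - r)%R, (zobs + r)%R[%classic by exact: measurable_itv.
  have sub : `](zobs - r)%R, (zobs + r)%R[%classic `<=` B.
    move=> x; rewrite /= in_itv /= => /andP[h1 h2]; apply: hr.
    rewrite ltr_norml; apply/andP; split; lra.
  apply: lt_le_trans (@P_mono R _ _ mI mB sub).
  by rewrite -lte_fin fineK ?P_fin.
set A := [set w : R | `|zobs| < `|w|].
have mA : measurable A.
  have -> : A = `]-oo, (- `|zobs|)%R[%classic `|` `]`|zobs|, +oo[%classic.
    apply/seteqP; split => x; rewrite /A /= !in_itv /= andbT ltr_normr.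
      by move=> /orP[h|h]; [right | left; lra].
    by case => h; apply/orP; [right; lra | left].
  by apply: measurableU; exact: measurable_itv.
pose K : R := 2 + (size s)%:R * 2.
have K0 : 0 < K by rewrite /K ltr_wpDr // mulr_ge0.
exists (2 * K / fine (P B)), 1, 1; split => //.
  by rewrite divr_gt0 // mulr_gt0.
move=> emin S e0 emm _ S1.
set G := Zgrid f L eps_max emin S zobs.
have mG : measurable G.
  apply: measurableU; last first.
    have -> : [set x | zobs - dobs f L eps_max zobs <= x <= zobs + dobs f L eps_max zobs]
       = `[zobs - dobs f L eps_max zobs, zobs + dobs f L eps_max zobs]%classic.
      by apply/seteqP; split => x; rewrite /= in_itv.
    exact: measurable_itv.
  apply: bigcupT_measurable => j.
  have [h|h] := pselect (zgrid f L eps_max emin S j < S /\ Zset f (zgrid f L eps_max emin S j)).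
    have -> : [set x | zgrid f L eps_max emin S j < S /\ Zset f (zgrid f L eps_max emin S j) /\ zgrid f L eps_max emin S j <= x <= zgrid f L eps_max emin S j.+1] =
       `[zgrid f L eps_max emin S j, zgrid f L eps_max emin S j.+1]%classic.
      apply/seteqP; split => x; rewrite /= in_itv /=; first by case=> _ [].
      by move=> hx; case: h => h1 h2.
    exact: measurable_itv.
  have -> : [set x | zgrid f L eps_max emin S j < S /\ Zset f (zgrid f L eps_max emin S j) /\ zgrid f L eps_max emin S j <= x <= zgrid f L eps_max emin S j.+1] = set0.
    by apply/seteqP; split => x //= [h1 [h2 _]]; apply: h.
  exact: measurable0.
set E := `]-oo, (- S)%R]%classic `|` `[S, +oo[%classic `|` NN R s emin.
have mE : measurable E.
  by apply: measurableU; [apply: measurableU; exact: measurable_itv | exact: NN_meas].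
have hequiv : forall x, ~ E x -> (B x <-> G x).
  move=> x hx.
  apply: (@grid_equiv R n f L eps_max emin S zobs e0 emm L0 hL fc Zobs).
  - move=> [i [q [hq hxq]]]; apply: hx; right; apply/(NN_mem R).
    have : [set` s] q by rewrite -hs; exists i.
    by move=> /= qs; exists q.
  - apply/andP; split; rewrite ltNge; apply/negP => h; apply: hx; left.
    + by left; rewrite /= in_itv /=.
    + by right; rewrite /= in_itv /= h.
have hd := @cond_diff R A B G E mA mB mG mE hequiv b0.
rewrite /p_selective /p_grid -/B -/G.
apply: le_trans hd _.
have hPE : fine (P E) <= 2 * expR (- S ^+ 2 / 2) + (size s)%:R * (2 * emin).
  have S1' : 1 <= S by lra.
  have m1 : measurable (`]-oo, (- S)%R]%classic : set R) by exact: measurable_itv.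
  have m2 : measurable (`[S, +oo[%classic : set R) by exact: measurable_itv.
  have m12 : measurable (`]-oo, (- S)%R]%classic `|` `[S, +oo[%classic : set R) by exact: measurableU.
  apply: le_trans (@P_sub_le R E _ _ mE m12 (NN_meas R s emin) (fun x h => h)) _.
  have h12 := @P_sub_le R _ _ _ m12 m1 m2 (fun x h => h).
  have t1 : fine (P `]-oo, (- S)%R]%classic) <= expR (- S ^+ 2 / 2).
    rewrite -lee_fin fineK ?P_fin //; exact: tail_left.
  have t2 : fine (P `[S, +oo[%classic) <= expR (- S ^+ 2 / 2).
    rewrite -lee_fin fineK ?P_fin //; exact: tail_right.
  have t3 := @NN_P R s emin (ltW e0).
  lra.
have ex0 := expR_ge0 (- S ^+ 2 / 2).
have sz0 : 0 <= (size s)%:R :> R by [].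
have -> : 2 * K / fine (P B) * (emin + expR (- S ^+ 2 / 2))
    = 2 * (K * (emin + expR (- S ^+ 2 / 2))) / fine (P B).
  by field; rewrite gt_eqF.
rewrite ler_pM2r ?invr_gt0 // ler_pM2l //.
apply: le_trans hPE _; rewrite /K.
nra.
Qed.
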